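(* Let $N$ be a positive integer and let the mesh $\Omega_N=\{\theta_{N,i}:i=-N,\dots,N\}$ satisfy $\theta_{N,-i}=-\theta_{N,i}$ for $i=1,\dots,N$. For $\lambda\in\mathbb{C}$ let $p_N(\cdot;\lambda)$ be the polynomial of degree at most $2N$ satisfying $p_N(0;\lambda)=1$ and $p_N'(\theta_{N,i};\lambda)=\lambda\,p_N(\theta_{N,i};\lambda)$ for $i\in\{-N,\dots,N\}\setminus\{0\}$. Let $\xi>0$ be such that $\det(D^TD-\xi^2I)\ne0$, and let $\omega\in\mathbb{R}$ be such that $p_N(\cdot;j\omega)$ is uniquely defined and $j\omega I-A_0-\sum_{i=1}^mA_ip_N(-\tau_i;j\omega)$ is nonsingular, so that $G_N(j\omega)=C\left(j\omega I-A_0-\sum_{i=1}^m A_ip_N(-\tau_i;j\omega)\right)^{-1}B+D$ is defined. Then the matrix $\mathcal{L}_\xi^N$ has the eigenvalue $\lambda=j\omega$ if and only if $G_N(j\omega)$ has a singular value equal to $\xi$.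
   Context: Let $n,m,n_u,n_y$ be positive integers, $A_0,\dots,A_m\in\mathbb{R}^{n\times n}$, $B\in\mathbb{R}^{n\times n_u}$, $C\in\mathbb{R}^{n_y\times n}$, $D\in\mathbb{R}^{n_y\times n_u}$, delays $\tau_1,\dots,\tau_m\ge0$, $\tau_{\max}=\max_i\tau_i>0$. For $\xi>0$ put $D_\xi=D^TD-\xi^2I_{n_u}$, $\tilde D_\xi=DD^T-\xi^2I_{n_y}$, and define $2n\times2n$ matrices $M_0=\begin{bmatrix} A_0-BD_\xi^{-1}D^TC & -BD_\xi^{-1}B^T\\ \xi^2 C^T\tilde D_\xi^{-1}C & -A_0^T+C^TDD_\xi^{-1}B^T\end{bmatrix}$, $M_i=\begin{bmatrix}A_i&0\\0&0\end{bmatrix}$, $M_{-i}=\begin{bmatrix}0&0\\0&-A_i^T\end{bmatrix}$, $1\le i\le m$. A mesh $\Omega_N$ consists of $2N+1$ points $-\tau_{\max}\le\theta_{N,-N}<\dots<\theta_{N,0}=0<\dots<\theta_{N,N}\le\tau_{\max}$. Let $X_N=(\mathbb{C}^{2n})^{2N+1}$ with elements $x=(x_{-N},\dots,x_N)$ and let $\mathcal{P}_Nx$ be the unique $\mathbb{C}^{2n}$-valued polynomial of degree $\le2N$ with $\mathcal{P}_Nx(\theta_{N,i})=x_i$. The matrix $\mathcal{L}_\xi^N:X_N\to X_N$ is defined by $(\mathcal{L}_\xi^Nx)_i=(\mathcal{P}_Nx)'(\theta_{N,i})$ for $i\neq0$ and $(\mathcal{L}_\xi^Nx)_0=M_0\mathcal{P}_Nx(0)+\sum_{i=1}^m\left(M_i\mathcal{P}_Nx(-\tau_i)+M_{-i}\mathcal{P}_Nx(\tau_i)\right)$.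 *)

(* Defs.v *)
(* Complex numbers: R[i] = complex R over an abstract real
   closed field R (the statement is purely algebraic). *)
From HB Require Import structures.
From mathcomp Require Import all_boot all_order all_algebra.
From mathcomp Require Import complex.
Set Implicit Arguments. Unset Strict Implicit. Unset Printing Implicit Defensive.
Import Order.TTheory GRing.Theory Num.Theory.
Local Open Scope ring_scope.

Section Defs.
Variable R : rcfType.
Local Notation C := R[i].
Local Notation toC := (real_complex R).

Definition Dxi (ny nu : nat) (D : 'M[R]_(ny, nu)) (xi : R) : 'M[R]_nu :=
  D^T *m D - (xi ^+ 2)%:M.
Definition tDxi (ny nu : nat) (D : 'M[R]_(ny, nu)) (xi : R) : 'M[R]_ny :=
  D *m D^T - (xi ^+ 2)%:M.

Definition Mzero (n nu ny : nat) (A0 : 'M[R]_n) (B : 'M[R]_(n, nu))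
  (Cm : 'M[R]_(ny, n)) (D : 'M[R]_(ny, nu)) (xi : R) : 'M[R]_(n + n) :=
  let Di := invmx (Dxi D xi) in
  let tDi := invmx (tDxi D xi) in
  block_mx (A0 - B *m Di *m D^T *m Cm) (- (B *m Di *m B^T))
           ((xi ^+ 2) *: (Cm^T *m tDi *m Cm)) (- A0^T + Cm^T *m D *m Di *m B^T).

Definition Mplus (n : nat) (Ai : 'M[R]_n) : 'M[R]_(n + n) := block_mx Ai 0 0 0.
Definition Mminus (n : nat) (Ai : 'M[R]_n) : 'M[R]_(n + n) := block_mx 0 0 0 (- Ai^T).

(* ---- mesh: theta_{N,i}, i = -N..N, is stored as theta (k : 'I_(2N+1))
   with i = k - N; the node theta_{N,0} is index k = N. ---- *)
Definition mid (N : nat) : 'I_(N.*2.+1) := inord N.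

Definition is_mesh (N : nat) (taumax : R) (theta : 'I_(N.*2.+1) -> R) : Prop :=
  [/\ forall k l : 'I_(N.*2.+1), (k < l)%N -> theta k < theta l,
      theta (mid N) = 0,
      - taumax <= theta ord0 &
      theta ord_max <= taumax].

Definition symmetric_mesh (N : nat) (theta : 'I_(N.*2.+1) -> R) : Prop :=
  forall k : 'I_(N.*2.+1), theta (rev_ord k) = - theta k.

Definition lag (N : nat) (theta : 'I_(N.*2.+1) -> R) (k : 'I_(N.*2.+1)) : {poly C} :=
  (\prod_(l | l != k) (toC (theta k) - toC (theta l)))^-1 *:
    \prod_(l | l != k) ('X - (toC (theta l))%:P).

(* X_N = (C^{2n})^{2N+1}: column k of x is x_{k-N}.
   P_N x (t) and (P_N x)'(t), the unique interpolating polynomial of degree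
   <= 2N (written in Lagrange form) and its derivative, evaluated at t. *)
Definition PN (d N : nat) (theta : 'I_(N.*2.+1) -> R) (x : 'M[C]_(d, N.*2.+1))
  (t : C) : 'cV[C]_d :=
  \sum_k (lag theta k).[t] *: col k x.
Definition dPN (d N : nat) (theta : 'I_(N.*2.+1) -> R) (x : 'M[C]_(d, N.*2.+1))
  (t : C) : 'cV[C]_d :=
  \sum_k ((lag theta k)^`()).[t] *: col k x.

Definition LxiN (n nu ny m N : nat) (A0 : 'M[R]_n) (A : 'I_m -> 'M[R]_n)
  (B : 'M[R]_(n, nu)) (Cm : 'M[R]_(ny, n)) (D : 'M[R]_(ny, nu))
  (tau : 'I_m -> R) (theta : 'I_(N.*2.+1) -> R) (xi : R)
  (x : 'M[C]_(n + n, N.*2.+1)) : 'M[C]_(n + n, N.*2.+1) :=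
  \matrix_(r, k)
    (if k == mid N then
       (map_mx toC (Mzero A0 B Cm D xi) *m PN theta x 0
        + \sum_(i < m) (map_mx toC (Mplus (A i)) *m PN theta x (toC (- tau i))
                        + map_mx toC (Mminus (A i)) *m PN theta x (toC (tau i)))) r 0
     else dPN theta x (toC (theta k)) r 0).


Definition pN_spec (N : nat) (theta : 'I_(N.*2.+1) -> R) (lam : C) (p : {poly C}) : Prop :=
  [/\ (size p <= N.*2.+1)%N,
      p.[0] = 1 &
      forall k : 'I_(N.*2.+1), k != mid N ->
        (p^`()).[toC (theta k)] = lam * p.[toC (theta k)]].

Definition singular_value (p q : nat) (G : 'M[C]_(p, q)) (s : R) : Prop :=
  0 <= s /\ eigenvalue ((map_mx (@conjc R) G)^T *m G) (toC (s ^+ 2)).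

End Defs.

(* Main.v *)
Require Import Defs.
From HB Require Import structures.
From mathcomp Require Import all_boot all_order all_algebra.
From mathcomp Require Import complex.
From mathcomp Require Import zify ring lra.
Import Order.TTheory GRing.Theory Num.Theory.
Local Open Scope ring_scope.

Module Aux.
Set Implicit Arguments. Unset Strict Implicit. Unset Printing Implicit Defensive.

Section PolyPart.
Variable R : rcfType.
Local Notation C := R[i].
Local Notation toC := (real_complex R).
Variables (N : nat) (theta : 'I_(N.*2.+1) -> R).
Hypothesis th_inj : injective theta.

Lemma lag_sample k l : (lag theta k).[toC (theta l)] = (k == l)%:R.
Proof.
rewrite /lag hornerZ horner_prod.
under [X in _ * X]eq_bigr do rewrite hornerXsubC.
have [<-|nkl] := eqVneq k l.
  rewrite mulVf //; apply/prodf_neq0 => j jk.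
  by rewrite subr_eq0 (inj_eq (@complexI R)) (inj_eq th_inj) eq_sym.
by rewrite [X in _ * X](bigD1 l) 1?eq_sym //= subrr mul0r mulr0.
Qed.

Lemma size_lag k : (size (lag theta k) <= N.*2.+1)%N.
Proof.
rewrite (leq_trans (size_scale_leq _ _)) // size_prod /=; last first.
  by move=> j _; rewrite polyXsubC_eq0.
rewrite (eq_bigr (fun=> 2%N)); last by move=> j _; rewrite size_XsubC.
rewrite sum_nat_const cardC1 card_ord /=.
rewrite -addnn; set a := N.*2; lia.
Qed.

Lemma nodes_eq0 (q : {poly C}) : (size q <= N.*2.+1)%N ->
  (forall k, q.[toC (theta k)] = 0) -> q = 0.
Proof.
move=> sq hq; apply/eqP; apply: contraTT sq => q0; rewrite -ltnNge.
have := @max_poly_roots _ q [seq toC (theta k) | k <- enum 'I_(N.*2.+1)] q0.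
rewrite size_map size_enum_ord; apply.
  by apply/allP => _ /mapP [k _ ->]; apply/rootP/hq.
rewrite map_inj_uniq ?enum_uniq // => a b /(@complexI R) /th_inj //.
Qed.

Lemma lag_interp (q : {poly C}) : (size q <= N.*2.+1)%N ->
  q = \sum_k q.[toC (theta k)] *: lag theta k.
Proof.
move=> sq; apply/eqP; rewrite -subr_eq0; apply/eqP/nodes_eq0.
  rewrite (leq_trans (size_polyD _ _)) // geq_max sq size_polyN.
  rewrite (leq_trans (size_sum _ _ _)) //.
  apply/bigmax_leqP => k _; rewrite (leq_trans (size_scale_leq _ _)) //.
  exact: size_lag.
move=> l; rewrite hornerD hornerN horner_sum.
rewrite (bigD1 l) //= big1 ?addr0; last first.
  by move=> k kl; rewrite hornerZ lag_sample (negPf kl) mulr0.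
by rewrite hornerZ lag_sample eqxx mulr1 subrr.
Qed.


Definition qr d (x : 'M[C]_(d, N.*2.+1)) r := \sum_k x r k *: lag theta k.

Lemma PN_entry d (x : 'M[C]_(d, N.*2.+1)) t r :
  PN theta x t r 0 = (qr x r).[t].
Proof.
rewrite /PN /qr summxE horner_sum; apply: eq_bigr => k _.
by rewrite !mxE [RHS]hornerZ mulrC.
Qed.

Lemma dPN_entry d (x : 'M[C]_(d, N.*2.+1)) t r :
  dPN theta x t r 0 = ((qr x r)^`()).[t].
Proof.
rewrite /dPN /qr summxE linear_sum horner_sum; apply: eq_bigr => k _.
rewrite !mxE; set L := lag theta k; by rewrite [in RHS]linearZ /= hornerZ mulrC.
Qed.

Lemma size_qr d (x : 'M[C]_(d, N.*2.+1)) r : (size (qr x r) <= N.*2.+1)%N.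
Proof.
rewrite (leq_trans (size_sum _ _ _)) //.
apply/bigmax_leqP => k _; rewrite (leq_trans (size_scale_leq _ _)) //.
exact: size_lag.
Qed.

Lemma qr_sample d (x : 'M[C]_(d, N.*2.+1)) r l : (qr x r).[toC (theta l)] = x r l.
Proof.
rewrite /qr horner_sum (bigD1 l) //= big1 ?addr0; last first.
  by move=> k kl; rewrite hornerZ lag_sample (negPf kl) mulr0.
by rewrite hornerZ lag_sample eqxx mulr1.
Qed.

Variable p : {poly C}.

Lemma PN_of d (x : 'M[C]_(d, N.*2.+1)) (v : 'cV_d) :
  (forall r, qr x r = v r 0 *: p) ->
  (forall t, PN theta x t = p.[t] *: v) /\ (forall t, dPN theta x t = (p^`()).[t] *: v).
Proof.
move=> hq; split => t; apply/matrixP => r j; rewrite [j]ord1.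
  by rewrite PN_entry hq hornerZ mxE mulrC.
by rewrite dPN_entry hq derivZ hornerZ mxE mulrC.
Qed.


Variable lam : C.
Hypothesis thmid : theta (mid N) = 0.
Hypothesis hp : pN_spec theta lam p.
Hypothesis huniq : forall q, pN_spec theta lam q -> q = p.

Lemma qr_prop d (x : 'M[C]_(d, N.*2.+1)) :
  (forall k, k != mid N -> forall r, dPN theta x (toC (theta k)) r 0 = lam * x r k) ->
  forall r, qr x r = x r (mid N) *: p.
Proof.
move=> h r; set q := qr x r.
have h0 : q.[0] = x r (mid N) by rewrite -(qr_sample x r (mid N)) thmid rmorph0.
case: hp => sp p0 dp.
suff /eqP : p + (q - q.[0] *: p) = p.
  by rewrite -subr_eq0 addrAC subrr add0r subr_eq0 h0 => /eqP.
apply: huniq; split.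
- rewrite (leq_trans (size_polyD _ _)) // geq_max sp.
  rewrite (leq_trans (size_polyD _ _)) // geq_max size_qr size_polyN.
  by rewrite (leq_trans (size_scale_leq _ _)).
- by rewrite hornerD hornerD hornerN hornerZ p0 mulr1 subrr addr0.
move=> k hk.
have hq : (q^`()).[toC (theta k)] = lam * q.[toC (theta k)].
  by rewrite -dPN_entry h // qr_sample.
rewrite !derivE !(hornerD, hornerN, hornerZ) dp // hq; ring.
Qed.


Variables (n nu ny m : nat) (A0 : 'M[R]_n) (A : 'I_m -> 'M[R]_n) (B : 'M[R]_(n, nu))
  (Cm : 'M[R]_(ny, n)) (D : 'M[R]_(ny, nu)) (tau : 'I_m -> R) (xi : R).

Definition midop (v : 'cV[C]_(n + n)) :=
  map_mx toC (Mzero A0 B Cm D xi) *m v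
  + \sum_(i < m) (map_mx toC (Mplus (A i)) *m (p.[toC (- tau i)] *: v)
                  + map_mx toC (Mminus (A i)) *m (p.[toC (tau i)] *: v)).

Lemma eig_v :
  (exists2 x, x != 0 & LxiN A0 A B Cm D tau theta xi x = lam *: x) <->
  (exists2 v, v != 0 & midop v = lam *: v).
Proof.
case: (hp) => sp p0 dp.
split.
- case=> x x0 hx.
  have hd : forall k, k != mid N -> forall r,
      dPN theta x (toC (theta k)) r 0 = lam * x r k.
    move=> k hk r; have := congr1 (fun M : 'M[C]_(n + n, N.*2.+1) => M r k) hx.
    by rewrite /LxiN mxE (negPf hk) [RHS]mxE.
  have hq := qr_prop hd.
  have hq' : forall r, qr x r = (col (mid N) x) r 0 *: p.
    by move=> r; rewrite hq mxE.
  have [hP hdP] := PN_of hq'.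
  exists (col (mid N) x).
    apply: contra x0 => /eqP v0; apply/eqP/matrixP => r k.
    by rewrite [RHS]mxE -(qr_sample x r k) hq' v0 mxE scale0r horner0.
  apply/matrixP => r j; rewrite [j]ord1.
  have := congr1 (fun M : 'M[C]_(n + n, N.*2.+1) => M r (mid N)) hx.
  rewrite /LxiN mxE eqxx; under eq_bigr => i _ do rewrite !hP.
  rewrite hP p0 scale1r /midop => ->.
  by rewrite !mxE.
- case=> v v0 hv.
  pose x := \matrix_(r, k) (p.[toC (theta k)] * v r 0).
  have hq : forall r, qr x r = v r 0 *: p.
    move=> r; rewrite /qr {1}(lag_interp sp) scaler_sumr.
    by apply: eq_bigr => k _; rewrite mxE [RHS]scalerA [in RHS]mulrC.
  have [hP hdP] := PN_of hq.
  exists x.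
    apply: contra v0 => /eqP x0; apply/eqP/matrixP => r j; rewrite [j]ord1.
    have := congr1 (fun M : 'M[C]_(n + n, N.*2.+1) => M r (mid N)) x0.
    by rewrite !mxE thmid rmorph0 p0 mul1r.
  apply/matrixP => r k; rewrite /LxiN mxE [RHS]mxE.
  case: eqP => [->|/eqP hk].
    under eq_bigr => i _ do rewrite !hP.
    rewrite hP p0 scale1r.
    transitivity ((midop v) r 0); first by [].
    by rewrite hv !mxE thmid rmorph0 p0 mul1r.
  by rewrite hdP mxE dp // mxE mulrA.
Qed.

End PolyPart.

Section ConjPart.
Variable R : rcfType.
Local Notation C := R[i].
Local Notation toC := (real_complex R).

Lemma conjc_lam (omega : R) :
  conjc (Complex 0 1 * toC omega) = - (Complex 0 1 * toC omega).
Proof. by apply/eqP; rewrite eq_complex /= !mul0r !mulr0 !mul1r; apply/andP; split; apply/eqP; ring. Qed.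

Lemma conjc_lamM (omega : R) b :
  conjc (Complex 0 1 * toC omega * b) = - (Complex 0 1 * toC omega) * conjc b.
Proof.
by case: b => b1 b2; apply/eqP; rewrite eq_complex /=; apply/andP; split; apply/eqP; ring.
Qed.

Lemma horner_conj (q : {poly C}) x : (map_poly conjc q).[x] = conjc (q.[conjc x]).
Proof. by rewrite -{1}[x]conjcK horner_map. Qed.

Lemma rev_mid N : rev_ord (mid N) = mid N.
Proof. by apply: val_inj; rewrite /= /mid inordK //; lia. Qed.

Variables (N : nat) (theta : 'I_(N.*2.+1) -> R) (omega : R) (p : {poly C}).
Hypothesis hsym : symmetric_mesh theta.
Hypothesis hp : pN_spec theta (Complex 0 1 * toC omega) p.
Hypothesis huniq : forall q, pN_spec theta (Complex 0 1 * toC omega) q -> q = p.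

Lemma p_conj t : p.[toC t] = conjc (p.[toC (- t)]).
Proof.
case: (hp) => sp p0 dp.
pose q := map_poly conjc p \Po (- 'X).
have sX : size (- 'X : {poly C}) = 2%N by rewrite size_polyN size_polyX.
suff qp : q = p.
  by rewrite -[in LHS]qp /q horner_comp hornerN hornerX -rmorphN horner_conj conjc_real.
apply: huniq; split.
- by rewrite size_comp_poly2 // size_map_poly.
- by rewrite horner_comp hornerN hornerX oppr0 horner_conj conjc0 p0 conjc1.
move=> k hk.
have hk' : rev_ord k != mid N.
  by apply: contra hk => /eqP e; rewrite -(rev_ordK k) e rev_mid.
have := dp _ hk'; rewrite hsym => e.
rewrite deriv_comp deriv_map derivN derivX hornerM !horner_comp.
rewrite !(hornerN, hornerX, hornerC) mulrN1 -rmorphN !horner_conj conjc_real e.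
by rewrite conjc_lamM; ring.
Qed.

End ConjPart.

Section Abstract.
Variables (F : fieldType) (n nu ny : nat).
Variables (A0 S Sh At0 : 'M[F]_n) (B : 'M[F]_(n, nu)) (C : 'M[F]_(ny, n))
  (D : 'M[F]_(ny, nu)) (Bt : 'M[F]_(nu, n)) (Ct : 'M[F]_(n, ny)) (Dt : 'M[F]_(nu, ny))
  (Di : 'M[F]_nu) (tDi : 'M[F]_ny) (s lam : F).
Hypothesis hDi : Di *m (Dt *m D - s%:M) = 1%:M.
Hypothesis hDi' : (Dt *m D - s%:M) *m Di = 1%:M.
Hypothesis hD : D *m Di = tDi *m D.
Hypothesis htDi : tDi *m (D *m Dt - s%:M) = 1%:M.

Lemma DDiDt : D *m Di *m Dt = 1%:M + s *: tDi.
Proof.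
rewrite hD -mulmxA.
have -> : D *m Dt = (D *m Dt - s%:M) + s%:M by rewrite subrK.
by rewrite mulmxDr htDi mul_mx_scalar.
Qed.

Section UW.
Variables (u w : 'cV[F]_n).
Definition K := Dt *m C *m u + Bt *m w.
Definition z := - (Di *m K).
Definition y := C *m u + D *m z.

Lemma I1 : (A0 - B *m Di *m Dt *m C) *m u + (- (B *m Di *m Bt)) *m w + S *m u
   = A0 *m u + S *m u + B *m z.
Proof.
rewrite /z /K mulmxBl mulNmx mulmxN mulmxDr !mulmxA mulmxDr !mulmxA opprD !addrA.
by rewrite [LHS](ACl (1*4*2*3)).
Qed.

Lemma L_Dz : (Dt *m D - s%:M) *m z = - K.
Proof. by rewrite /z mulmxN mulmxA hDi' mul1mx. Qed.

Lemma I3 : y = - (s *: (tDi *m C *m u) + D *m Di *m Bt *m w).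
Proof.
rewrite /y /z /K mulmxN mulmxDr !mulmxA mulmxDr !mulmxA DDiDt !mulmxDl mul1mx -!scalemxAl.
by rewrite -addrA opprD addNKr.
Qed.

Lemma I2 : (s *: (Ct *m tDi *m C)) *m u + (- At0 + Ct *m D *m Di *m Bt) *m w - Sh *m w
   = - (At0 *m w) - Sh *m w - Ct *m y.
Proof.
rewrite I3 mulmxN opprK mulmxDr -scalemxAr !mulmxA mulmxDl mulNmx -scalemxAl !addrA.
by rewrite [LHS](ACl (2*4*1*3)).
Qed.
End UW.

Definition Delta := lam%:M - A0 - S.
Definition Deltah := (- lam)%:M - At0 - Sh.
Hypothesis hU : Delta \in unitmx.
Hypothesis hUh : Deltah \in unitmx.
Definition G := C *m invmx Delta *m B + D.
Definition Gh := Bt *m invmx Deltah *m Ct + Dt.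
Definition E1 (u w : 'cV[F]_n) := (A0 - B *m Di *m Dt *m C) *m u + (- (B *m Di *m Bt)) *m w + S *m u = lam *: u.
Definition E2 (u w : 'cV[F]_n) := (s *: (Ct *m tDi *m C)) *m u + (- At0 + Ct *m D *m Di *m Bt) *m w - Sh *m w = lam *: w.

Lemma E1_iff (u w : 'cV[F]_n) : E1 u w <-> Delta *m u = B *m z u w.
Proof.
rewrite /E1 I1 /Delta !mulmxBl mul_scalar_mx; split => [<-|<-].
  by rewrite [LHS](ACl ((1*4)*(2*5)*3)) /= !subrr !add0r.
by rewrite !addrA [LHS](ACl ((1*4)*(2*5)*3)) /= !subrr !add0r.
Qed.

Lemma E2_iff (u w : 'cV[F]_n) : E2 u w <-> Deltah *m w = Ct *m y u w.
Proof.
rewrite /E2 I2 /Deltah !mulmxBl mul_scalar_mx scaleNr; split => [<-|<-].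
  by rewrite !opprD !opprK [LHS](ACl ((1*4)*(2*5)*3)) /= !subrr !add0r.
by rewrite !opprD !opprK !addrA [LHS](ACl ((1*4)*(2*5)*3)) /= !addNr !add0r.
Qed.

Lemma abstract_main :
  (exists u w, ((u != 0) || (w != 0)) /\ E1 u w /\ E2 u w) <->
  (exists2 z0 : 'cV[F]_nu, z0 != 0 & Gh *m G *m z0 = s *: z0).
Proof.
split.
- case=> u [w [nz [e1 e2]]].
  move/E1_iff: e1 => e1; move/E2_iff: e2 => e2.
  have L := L_Dz u w.
  move: e1 e2 L; rewrite /y; set z0 := z u w => e1 e2 L.
  set y0 := C *m u + D *m z0 in e2.
  have hu : u = invmx Delta *m (B *m z0) by rewrite -e1 mulKmx.
  have hw : w = invmx Deltah *m (Ct *m y0) by rewrite -e2 mulKmx.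
  have hy : y0 = G *m z0 by rewrite /y0 {1}hu /G mulmxDl !mulmxA.
  exists z0.
    apply: contraTneq nz => z00.
    have u0 : u = 0 by rewrite hu z00 !mulmx0.
    have y00 : y0 = 0 by rewrite hy z00 mulmx0.
    by rewrite u0 hw y00 !mulmx0 eqxx.
  rewrite -mulmxA -hy /Gh mulmxDl -!mulmxA -hw.
  rewrite -(subKr (Dt *m D *m z0) (s *: z0)) -mul_scalar_mx -mulmxBl L /K.
  rewrite /y0 mulmxDr !mulmxA opprK.
  by rewrite !addrA [LHS](ACl (3*2*1)).
- case=> z0 z0n hz.
  set y0 := G *m z0.
  set u := invmx Delta *m (B *m z0).
  set w := invmx Deltah *m (Ct *m y0).
  have e1 : Delta *m u = B *m z0 by rewrite mulKVmx.
  have e2 : Deltah *m w = Ct *m y0 by rewrite mulKVmx.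
  have hy : y0 = C *m u + D *m z0 by rewrite /y0 /G /u mulmxDl !mulmxA.
  have hs : Bt *m w + Dt *m y0 = s *: z0.
    by rewrite -hz -mulmxA -/y0 /Gh mulmxDl -!mulmxA.
  have hz0 : z u w = z0.
    rewrite /z -[z0]mul1mx -hDi -mulmxA -mulmxN; congr (Di *m _).
    rewrite mulmxBl mul_scalar_mx -hs hy /K mulmxDr !mulmxA.
    by rewrite !opprD !addrA [RHS](ACl ((1*4)*3*2)) /= subrr add0r.
  exists u, w; split; [|split].
  + apply: contraT; rewrite negb_or => /andP [/negPn/eqP u0 /negPn/eqP w0].
    by move: z0n; rewrite -hz0 /z /K u0 w0 !mulmx0 addr0 mulmx0 oppr0 eqxx.
  + by apply/E1_iff; rewrite hz0.
  by apply/E2_iff; rewrite /y hz0 -hy.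
Qed.

End Abstract.

Lemma row_col_ker (F : fieldType) k (M : 'M[F]_k) :
  (exists2 v : 'rV_k, v != 0 & v *m M = 0) -> (exists2 z : 'cV_k, z != 0 & M *m z = 0).
Proof.
move/det0P; rewrite -det_tr => /det0P [v v0 hv].
exists v^T; first by rewrite trmx_eq0.
by rewrite -[M]trmxK -trmx_mul hv trmx0.
Qed.

Lemma eig_col (F : fieldType) k (H : 'M[F]_k) a :
  eigenvalue H a <-> exists2 z : 'cV_k, z != 0 & H *m z = a *: z.
Proof.
split.
- move/eigenvalueP => [v hv v0].
  have [|z z0 hz] := @row_col_ker _ _ (H - a%:M).
    by exists v => //; rewrite mulmxBr mul_mx_scalar hv subrr.
  by exists z => //; apply/eqP; rewrite -subr_eq0 -mul_scalar_mx -mulmxBl hz.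
- move=> [z z0 hz]; apply/eigenvalueP.
  have [|v v0 hv] := @row_col_ker _ _ (H - a%:M)^T.
    by exists z^T; rewrite ?trmx_eq0 // -trmx_mul mulmxBl hz mul_scalar_mx subrr trmx0.
  exists v^T; last by rewrite trmx_eq0.
  apply/eqP; rewrite -subr_eq0 -mul_mx_scalar -mulmxBr.
  by rewrite -[(H - a%:M)]trmxK -trmx_mul hv trmx0.
Qed.

Section RFacts.
Variables (R : rcfType) (ny nu : nat) (D : 'M[R]_(ny, nu)) (xi : R).
Hypothesis xi0 : 0 < xi.
Hypothesis hdet : \det (Dxi D xi) != 0.

Lemma Dxi_unit : Dxi D xi \in unitmx.
Proof. by rewrite unitmxE unitfE. Qed.

Lemma D_Dxi : D *m Dxi D xi = tDxi D xi *m D.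
Proof.
by rewrite /Dxi /tDxi mulmxBr mulmxBl mul_mx_scalar mul_scalar_mx !mulmxA.
Qed.

Lemma tDxi_unit : tDxi D xi \in unitmx.
Proof.
apply: contraT; rewrite unitmxE unitfE negbK => /det0P [y y0 hy].
have [yD0|yDn] := eqVneq (y *m D) 0.
  move/eqP: hy; rewrite /tDxi mulmxBr mulmxA yD0 mul0mx mul_mx_scalar sub0r oppr_eq0.
  rewrite scaler_eq0 (negPf y0) orbF expf_eq0 /= (gt_eqF xi0) //.
have : (y *m D) *m Dxi D xi = 0 by rewrite -mulmxA D_Dxi mulmxA hy mul0mx.
move=> h; move: hdet; have /det0P : exists2 v : 'rV_nu, v != 0 & v *m Dxi D xi = 0.
  by exists (y *m D).
by move=> /eqP ->; rewrite eqxx.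
Qed.

Lemma hD_R : D *m invmx (Dxi D xi) = invmx (tDxi D xi) *m D.
Proof.
rewrite -[LHS](mulKmx tDxi_unit) [tDxi D xi *m _]mulmxA -D_Dxi -mulmxA.
by rewrite mulmxV ?Dxi_unit // mulmx1.
Qed.

End RFacts.

Lemma sum_col_mx (F : nmodType) m1 m2 k (I : Type) (r : seq I) (P : pred I)
   (f : I -> 'M[F]_(m1, k)) (g : I -> 'M[F]_(m2, k)) :
  \sum_(i <- r | P i) col_mx (f i) (g i) = col_mx (\sum_(i <- r | P i) f i) (\sum_(i <- r | P i) g i).
Proof.
elim/big_rec3: _ => [|i x y z _ ->]; first by rewrite col_mx0.
by rewrite add_col_mx.
Qed.

Section Split.
Variable R : rcfType.
Local Notation C := R[i].
Local Notation toC := (real_complex R).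
Variables (n nu ny m : nat) (A0 : 'M[R]_n) (A : 'I_m -> 'M[R]_n) (B : 'M[R]_(n, nu))
  (Cm : 'M[R]_(ny, n)) (D : 'M[R]_(ny, nu)) (tau : 'I_m -> R) (xi : R)
  (p : {poly C}) (lam : C).

Local Notation mC M := (map_mx toC M).
Definition Sc := \sum_(i < m) p.[toC (- tau i)] *: mC (A i).
Definition Shc := \sum_(i < m) p.[toC (tau i)] *: (mC (A i))^T.
Definition Dic := mC (invmx (Dxi D xi)).
Definition tDic := mC (invmx (tDxi D xi)).

Lemma midop_split u w :
  midop p A0 A B Cm D tau xi (col_mx u w) = lam *: col_mx u w <->
  E1 (mC A0) Sc (mC B) (mC Cm) (mC B)^T (mC D)^T Dic lam u w /\
  E2 Shc (mC A0)^T (mC Cm) (mC D) (mC B)^T (mC Cm)^T Dic tDic (toC (xi ^+ 2)) lam u w.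
Proof.
have hM0 : mC (Mzero A0 B Cm D xi) =
  block_mx (mC A0 - mC B *m Dic *m (mC D)^T *m mC Cm) (- (mC B *m Dic *m (mC B)^T))
           (toC (xi ^+ 2) *: ((mC Cm)^T *m tDic *m mC Cm))
           (- (mC A0)^T + (mC Cm)^T *m mC D *m Dic *m (mC B)^T).
  by rewrite /Mzero map_block_mx !(map_mxB, map_mxN, map_mxM, map_mxD, map_mxZ, map_trmx).
have hsum : \sum_(i < m) (mC (Mplus (A i)) *m (p.[toC (- tau i)] *: col_mx u w)
                  + mC (Mminus (A i)) *m (p.[toC (tau i)] *: col_mx u w))
            = col_mx (Sc *m u) (- (Shc *m w)).
  rewrite /Sc /Shc (mulmx_suml u) (mulmx_suml w) -sumrN -sum_col_mx.
  apply: eq_bigr => i _.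
  rewrite /Mplus /Mminus !map_block_mx !map_mx0 map_mxN !scale_col_mx !mul_block_col.
  rewrite !mul0mx !addr0 !add0r add_col_mx addr0 add0r -!scalemxAl -!scalemxAr.
  by rewrite map_trmx mulNmx scalerN.
rewrite /midop hM0 hsum mul_block_col add_col_mx scale_col_mx.
split => [/eq_col_mx [h1 h2] | [h1 h2]]; first by split.
by rewrite -h1 -h2.
Qed.

End Split.

Section ConjMx.
Variable R : rcfType.
Local Notation toC := (real_complex R).
Lemma map_conj_real k l (X : 'M[R]_(k, l)) : map_mx conjc (map_mx toC X) = map_mx toC X.
Proof. by apply/matrixP => i j; rewrite !mxE conjc_real. Qed.
Lemma map_conj_scale k l a (X : 'M[R[i]]_(k, l)) : map_mx conjc (a *: X) = conjc a *: map_mx conjc X.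
Proof. exact: map_mxZ. Qed.
Lemma map_conj_scalar k a : map_mx conjc (a%:M : 'M[R[i]]_k) = (conjc a)%:M.
Proof. exact: map_scalar_mx. Qed.
End ConjMx.


End Aux.
Import Aux.

Theorem theorem3 (R : rcfType) (n nu ny m N : nat)
  (A0 : 'M[R]_n) (A : 'I_m -> 'M[R]_n) (B : 'M[R]_(n, nu))
  (Cm : 'M[R]_(ny, n)) (D : 'M[R]_(ny, nu))
  (tau : 'I_m -> R) (theta : 'I_(N.*2.+1) -> R) (xi omega : R) (p : {poly R[i]}) :
  (0 < n)%N -> (0 < nu)%N -> (0 < ny)%N -> (0 < m)%N ->
  (forall i, 0 <= tau i) ->
  0 < \big[Num.max/0]_(i < m) tau i ->
  (0 < N)%N ->
  is_mesh (\big[Num.max/0]_(i < m) tau i) theta ->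
  symmetric_mesh theta ->
  0 < xi ->
  \det (Dxi D xi) != 0 ->
  pN_spec theta (Complex 0 1 * real_complex R omega) p ->
  (forall q, pN_spec theta (Complex 0 1 * real_complex R omega) q -> q = p) ->
  let jw := Complex 0 1 * real_complex R omega in
  let Mw := jw%:M - map_mx (real_complex R) A0
            - \sum_(i < m) p.[real_complex R (- tau i)] *: map_mx (real_complex R) (A i) in
  Mw \in unitmx ->
  let G := map_mx (real_complex R) Cm *m invmx Mw *m map_mx (real_complex R) B
           + map_mx (real_complex R) D in
  (exists2 x : 'M[R[i]]_(n + n, N.*2.+1), x != 0 & LxiN A0 A B Cm D tau theta xi x = jw *: x)
  <-> singular_value G xi.
Proof.
move=> hn hnu hny hm htau htmax hN hmesh hsym xi0 hdet hp huniq jw Mw hMw Gc.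
case: hmesh => hmono hmid _ _.
have th_inj : injective theta.
  move=> k l e; apply: val_inj; have [lt|gt|//] := ltngtP k l.
  - by move: (hmono _ _ lt); rewrite e ltxx.
  - by move: (hmono _ _ gt); rewrite e ltxx.
apply: (iff_trans (eig_v th_inj hmid hp huniq A0 A B Cm D tau xi)).
set toC := real_complex R.
have hsplit :
  (exists2 v, v != 0 & midop p A0 A B Cm D tau xi v = jw *: v) <->
  (exists u w, ((u != 0) || (w != 0)) /\
    E1 (map_mx toC A0) (Sc A tau p) (map_mx toC B) (map_mx toC Cm) (map_mx toC B)^T
       (map_mx toC D)^T (Dic D xi) jw u w /\
    E2 (Shc A tau p) (map_mx toC A0)^T (map_mx toC Cm) (map_mx toC D) (map_mx toC B)^T
       (map_mx toC Cm)^T (Dic D xi) (tDic D xi) (toC (xi ^+ 2)) jw u w).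
  split.
  - case=> v v0 hv; exists (usubmx v), (dsubmx v).
    split; first by rewrite -negb_and -col_mx_eq0 vsubmxK.
    by apply/midop_split; rewrite vsubmxK.
  - case=> u [w [nz h]]; exists (col_mx u w); first by rewrite col_mx_eq0 negb_and.
    exact/midop_split.
apply: (iff_trans hsplit).
have mDxi : map_mx toC (Dxi D xi) = (map_mx toC D)^T *m map_mx toC D - (toC (xi ^+ 2))%:M.
  by rewrite /Dxi map_mxB map_mxM map_scalar_mx map_trmx.
have mtDxi : map_mx toC (tDxi D xi) = map_mx toC D *m (map_mx toC D)^T - (toC (xi ^+ 2))%:M.
  by rewrite /tDxi map_mxB map_mxM map_scalar_mx map_trmx.
have hDi : Dic D xi *m ((map_mx toC D)^T *m map_mx toC D - (toC (xi ^+ 2))%:M) = 1%:M.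
  by rewrite -mDxi /Dic -map_mxM mulVmx ?map_mx1 // Dxi_unit.
have hDi' : ((map_mx toC D)^T *m map_mx toC D - (toC (xi ^+ 2))%:M) *m Dic D xi = 1%:M.
  by rewrite -mDxi /Dic -map_mxM mulmxV ?map_mx1 // Dxi_unit.
have hD : map_mx toC D *m Dic D xi = tDic D xi *m map_mx toC D.
  by rewrite /Dic /tDic -!map_mxM hD_R.
have htDi : tDic D xi *m (map_mx toC D *m (map_mx toC D)^T - (toC (xi ^+ 2))%:M) = 1%:M.
  by rewrite -mtDxi /tDic -map_mxM mulVmx ?map_mx1 // tDxi_unit.
have hU : Delta (map_mx toC A0) (Sc A tau p) jw \in unitmx by exact: hMw.
have hDh : Deltah (Shc A tau p) (map_mx toC A0)^T jw = (map_mx conjc Mw)^T.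
  rewrite /Deltah /Mw !map_mxB; have -> : map_mx conjc (\sum_(i < m) p.[toC (- tau i)] *: map_mx toC (A i))
           = \sum_(i < m) p.[toC (tau i)] *: map_mx toC (A i).
    rewrite map_mx_sum; apply: eq_bigr => i _.
    by rewrite map_conj_scale map_conj_real -(p_conj hsym hp huniq).
  rewrite map_conj_scalar /jw conjc_lam map_conj_real.
  rewrite [RHS]linearB /= [X in _ = X - _]linearB /= tr_scalar_mx.
  congr (_ - _); rewrite /Shc linear_sum; apply: eq_bigr => i _.
  by rewrite linearZ.
have hUh : Deltah (Shc A tau p) (map_mx toC A0)^T jw \in unitmx.
  by rewrite hDh unitmx_tr map_unitmx.
have hGh : Gh (Shc A tau p) (map_mx toC A0)^T (map_mx toC B)^T (map_mx toC Cm)^T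
              (map_mx toC D)^T jw = (map_mx conjc Gc)^T.
  rewrite /Gh hDh -trmx_inv -map_invmx /Gc map_mxD !map_mxM !map_conj_real.
  by rewrite linearD /= !trmx_mul mulmxA.
have hab := abstract_main (map_mx toC B) (map_mx toC Cm) (map_mx toC B)^T
  (map_mx toC Cm)^T hDi hDi' hD htDi hU hUh.
apply: (iff_trans hab); rewrite hGh.
split => [[z z0 hz]|[_ /eig_col [z z0 hz]]].
  by split; [exact: ltW | apply/eig_col; exists z].
by exists z.
Qed.
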